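(* Let $n\ge2$ and $W=(w_{ij},\ 1\le j<i\le n)\in(\mathbb{R}_{>0})^{n(n-1)/2}$, and let $T^\triangle_n(W)=(t_{ij},\ 1\le j<i\le n)$. Then the map $(\log w_{ij},\ 1\le j<i\le n)\mapsto(\log t_{ij},\ 1\le j<i\le n)$ has Jacobian $\pm1$.
   Context: Triangular arrays are $X=(x_{ij},\ 1\le j<i\le n)$ of positive reals. Local maps: for $i\ge3$, $l_{i1}$ replaces $x_{i1}$ by $x_{i-1,1}x_{i1}$; for $2\le j$ with $j+1<i$, $l_{ij}$ replaces $(x_{i-1,j-1},x_{i-1,j},x_{i,j-1},x_{ij})=(a,b,c,d)$ by $(bc/(ab+ac),b,c,d(b+c))$, other entries unchanged. For $1\le j\le n-2$, $\rho^{\triangle,n}_j=l_{n-j+1,1}\circ l_{n-j+2,2}\circ\cdots\circ l_{n-1,j-1}\circ l_{nj}$. $r^\triangle_{n,n-1}$ replaces $x_{n,n-1}$ by $1/x_{n,n-1}$. With conventions $x_{i0}=1$, $x_{n+1,n-1}=1$: for $k=0,\dots,\lfloor n/2\rfloor-1$, $b^{\triangle,n}_{n-2k,n-2k-1}$ replaces $x_{n-2k,n-2k-1}$ by $x_{n-2k+1,n-2k-1}x_{n-2k,n-2k-2}/x_{n-2k,n-2k-1}$; for $k=1,\dots,\lfloor(n-1)/2\rfloor$, $b^{\triangle,n}_{n-2k+1,n-2k}$ is the identity. $\rho^{\triangle,n}_{n-1}=b^{\triangle,n}_{2,1}\circ\cdots\circ b^{\triangle,n}_{n,n-1}\circ r^\triangle_{n,n-1}$,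 $R^\triangle_n=\rho^{\triangle,n}_{n-1}\circ\cdots\circ\rho^{\triangle,n}_1$. $T^\triangle_2(x_{21})=x_{21}$ and for $n\ge3$, $T^\triangle_n(X_n)=R^\triangle_n$ applied to the array whose first $n-1$ rows are $T^\triangle_{n-1}(x_{ij},\ 1\le j<i\le n-1)$ and whose last row is $(x_{n1},\dots,x_{n,n-1})$. *)

(* Defs.v *)
From HB Require Import structures.
From mathcomp Require Import all_boot all_order all_algebra.
From mathcomp Require Import all_classical all_reals all_analysis.
Set Implicit Arguments. Unset Strict Implicit. Unset Printing Implicit Defensive.
Import Order.TTheory GRing.Theory Num.Theory.
Local Open Scope ring_scope.

Section Triangular.
Variable R : realType.

(* A triangular array (x_ij, 1 <= j < i <= n) is represented by a total
   function nat -> nat -> R; only the entries with 1 <= j < i <= n matter. *)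
Definition tarray := nat -> nat -> R.

Definition upd (X : tarray) (i j : nat) (v : R) : tarray :=
  fun a b => if (a == i) && (b == j) then v else X a b.

Definition lmap (i j : nat) (X : tarray) : tarray :=
  if j == 1%N then upd X i 1 (X i.-1 1%N * X i 1%N)
  else
    let a := X i.-1 j.-1 in let b := X i.-1 j in
    let c := X i j.-1 in let d := X i j in
    upd (upd X i.-1 j.-1 (b * c / (a * b + a * c))) i j (d * (b + c)).

Definition rho (n j : nat) (X : tarray) : tarray :=
  foldr (fun k Y => lmap (n - j + k) k Y) X (iota 1 j).

Definition rinv (n : nat) (X : tarray) : tarray :=
  upd X n n.-1 (X n n.-1)^-1.

Definition getc (n : nat) (X : tarray) (i j : nat) : R :=
  if j == 0%N then 1
  else if (i == n.+1) && (j == n.-1) then 1 else X i j.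

Definition bmap (n m : nat) (X : tarray) : tarray :=
  if odd (n - m) then X
  else upd X m m.-1 (getc n X m.+1 m.-1 * getc n X m (m - 2) / X m m.-1).

Definition rho_last (n : nat) (X : tarray) : tarray :=
  foldr (fun m Y => bmap n m Y) (rinv n X) (iota 2 n.-1).

Definition Rtri (n : nat) (X : tarray) : tarray :=
  rho_last n (foldl (fun Y j => rho n j Y) X (iota 1 (n - 2))).

Fixpoint Ttri (n : nat) (X : tarray) : tarray :=
  match n with
  | S ((S (S _)) as m) =>
      Rtri m.+1 (fun i j => if i == m.+1 then X i j else Ttri m X i j)
  | _ => X
  end.

Definition tpairs (n : nat) : seq (nat * nat) :=
  flatten [seq [seq (i, j) | j <- iota 1 i.-1] | i <- iota 2 n.-1].

Definition tdim (n : nat) : nat := size (tpairs n).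

Definition exp_array (n : nat) (u : 'rV[R]_(tdim n)) : tarray :=
  fun i j => match @insub nat (fun k => k < tdim n)%N 'I_(tdim n) (index (i, j) (tpairs n)) with
             | Some k => expR (u ord0 k)
             | None => 1
             end.

Definition log_vec (n : nat) (X : tarray) : 'rV[R]_(tdim n) :=
  \row_(k < tdim n) ln (X (nth (0, 0) (tpairs n) k).1 (nth (0, 0) (tpairs n) k).2).

Definition logT (n : nat) (u : 'rV[R]_(tdim n)) : 'rV[R]_(tdim n) :=
  @log_vec n (Ttri n (@exp_array n u)).

End Triangular.

(* Main.v *)
Require Import Defs.
From HB Require Import structures.
From mathcomp Require Import all_boot all_order all_algebra.
From mathcomp Require Import all_classical all_reals all_analysis.
Import Order.TTheory GRing.Theory Num.Theory.
Import numFieldNormedType.Exports.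
Local Open Scope ring_scope.
Set Implicit Arguments. Unset Strict Implicit.

Section Calc.
Variable R : numFieldType.
Variable N : nat.
Notation V := 'rV[R]_N.

Definition ek (k : 'I_N) : V := delta_mx 0 k.

Definition Hgood (k : 'I_N) (h : V -> R) :=
  (forall v, differentiable h v) /\ (forall v (t : R), h (t *: ek k + v) = h v).

Definition elem (k : 'I_N) (s : R) (h : V -> R) (v : V) : V :=
  v + ((s - 1) * v 0 k + h v) *: ek k.

Definition Good (f : V -> V) := forall u, differentiable f u /\
  (\det (jacobian f u) = 1 \/ \det (jacobian f u) = -1).

Lemma diff_coord (k : 'I_N) (u : V) :
  'd (fun v : V => v 0 k) u = (fun v : V => v 0 k) :> (V -> R).
Proof.
have @f : {linear V -> R}.
  by exists (fun N : V => N 0 k); do 2![eexists]; do ?[constructor];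
     rewrite ?mxE// => ? *; rewrite ?mxE//; move=> ?; rewrite !mxE.
rewrite (_ : (fun _ => _) = f) //; apply: diff_lin; exact/coord_continuous.
Qed.

Lemma det_special (A : 'M[R]_N) (k : 'I_N) (s : R) :
  (forall j, A k j = s * (k == j)%:R) ->
  (forall i j, i != k -> j != k -> A i j = (i == j)%:R) ->
  \det A = s.
Proof.
move=> Hk Hij; rewrite (expand_det_row _ k) (bigD1 k) //= big1; last first.
  by move=> j /negbTE jk; rewrite Hk eq_sym jk mulr0 mul0r.
rewrite addr0 Hk eqxx mulr1 /cofactor -signr_odd addnn odd_double expr0 mul1r.
suff -> : row' k (col' k A) = 1%:M by rewrite det1 mulr1.
apply/matrixP => i j; rewrite !mxE Hij; last 2 first.
- by rewrite eq_sym neq_lift.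
- by rewrite eq_sym neq_lift.
by rewrite (inj_eq (@lift_inj _ k)).
Qed.

Lemma Good_elem k s h : (s = 1 \/ s = -1) -> Hgood k h -> Good (elem k s h).
Proof.
move=> hs [hd hi] u.
have dphi : differentiable (fun v : V => (s - 1) * v 0 k + h v) u.
  apply: differentiableD => //.
  have -> : (fun v : V => (s - 1) * v 0 k) = (s - 1) *: (fun v : V => v 0 k).
    by apply/funext => v.
  apply: differentiableZ; exact: differentiable_coord.
have dsc : differentiable (fun v : V => ((s - 1) * v 0 k + h v) *: ek k) u.
  exact: differentiableZl.
have did : differentiable (@id V) u by exact: ex_diff.
have fE : elem k s h = id + (fun v : V => ((s - 1) * v 0 k + h v) *: ek k).
  by apply/funext.
split; first by rewrite fE; apply: differentiableD.
suff Jdet : (\det (jacobian (elem k s h) u) : R) = s by rewrite Jdet.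
have dh0 : 'd h u (ek k) = 0.
  rewrite -deriveE //; rewrite /derive.
  have -> : (fun t : R => t^-1 *: ((h \o shift u) (t *: ek k) - h u)) = cst 0.
    by apply/funext => t /=; rewrite hi subrr scaler0.
  by rewrite lim_cst.
have dphiE : forall w, 'd (fun v : V => (s - 1) * v 0 k + h v) u w
   = (s - 1) * w 0 k + 'd h u w.
  move=> w.
  have -> : (fun v : V => (s - 1) * v 0 k + h v) = (s - 1) *: (fun v : V => v 0 k) + h.
    by apply/funext => v.
  rewrite diffD //; last first.
    by apply: differentiableZ; exact: differentiable_coord.
  rewrite /= diffZ ?diff_coord //; exact: differentiable_coord.
have dE : forall w, 'd (elem k s h) u w = w + ((s - 1) * w 0 k + 'd h u w) *: ek k.
  move=> w; rewrite fE diffD //.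
  have dZ := diffZl (ek k) dphi. rewrite /=. have e2 := congr1 (fun g => g w) dZ. rewrite [X in _ + X = _]e2.
  rewrite dphiE. congr (_ + _). by rewrite (@diff_val _ _ _ _ _ _ _ (is_diff_id u)).
apply: (@det_special _ k).
  move=> j; rewrite /jacobian mxE.
  rewrite (congr1 (fun M : 'rV_N => M 0 j) (dE (delta_mx 0 k))) /=.
  rewrite !mxE dh0 addr0 eqxx /= (eq_sym k j); case: (j == k) => /=; rewrite ?mulr1 ?mulr0 ?addr0 //.
  have kk : (k == k) = true by apply/eqP.
  by rewrite kk mulr1 addrC subrK.
move=> i j ik jk; rewrite /jacobian mxE.
rewrite (congr1 (fun M : 'rV_N => M 0 j) (dE (delta_mx 0 i))) /=.
rewrite !mxE.
have -> : (j == k) = false by apply/eqP => E; move: jk; rewrite E eqxx.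
rewrite andbF mulr0 addr0 eq_sym /=.
by [].
Qed.

Lemma my_lin1 (F : V -> V) :
  (forall (a : R) x y, F (a *: x + y) = a *: F x + F y) ->
  forall v, v *m lin1_mx F = F v.
Proof.
move=> HF.
have F0 : F 0 = 0.
  have H := HF 1 0 0; rewrite !scale1r addr0 in H.
  by apply: (addrI (F 0)); rewrite addr0 -H.
have FD : forall x y, F (x + y) = F x + F y.
  by move=> x y; have := HF 1 x y; rewrite !scale1r.
have FZ : forall (a : R) x, F (a *: x) = a *: F x.
  by move=> a x; rewrite -[a *: x]addr0 HF F0 addr0.
move=> v; rewrite [v in RHS]matrix_sum_delta big_ord1.
have -> : F (\sum_(j < N) v 0 j *: delta_mx 0 j) = \sum_(j < N) v 0 j *: F (delta_mx 0 j).
  apply: (big_ind2 (fun a b => F a = b)) => //.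
    by move=> x1 x2 y1 y2 <- <-; rewrite FD.
apply/rowP=> i.
by rewrite mxE summxE; apply: eq_bigr => j _; rewrite !mxE.
Qed.

Lemma jac_row (h : V -> V) x (v : V) : v *m jacobian h x = 'd h x v.
Proof.
rewrite /jacobian.
apply: my_lin1 => a y z.
by rewrite linearP.
Qed.

Lemma jacobian_comp (f g : V -> V) u : differentiable g u -> differentiable f (g u) ->
  jacobian (f \o g) u = jacobian g u *m jacobian f (g u).
Proof.
move=> dg df.
have dc := diff_comp dg df.
apply/row_matrixP => i; rewrite !rowE mulmxA.
have e1 := jac_row (f \o g) u (delta_mx 0 i).
have e2 := jac_row f (g u) ('d g u (delta_mx 0 i)).
have e3 := jac_row g u (delta_mx 0 i).
have e4 := congr1 (fun F => F (delta_mx 0 i)) dc.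
exact: (etrans e1 (etrans e4 (etrans (esym e2) (congr1 (fun w => w *m jacobian f (g u)) (esym e3))))).
Qed.


Lemma pm1M (a b : R) : (a = 1 \/ a = -1) -> (b = 1 \/ b = -1) -> (a * b = 1 \/ a * b = -1).
Proof.
case=> ->; case=> ->.
- by left; rewrite mulr1.
- by right; rewrite mul1r.
- by right; rewrite mulr1.
- by left; rewrite mulrNN mulr1.
Qed.

Lemma Good_comp f g : Good f -> Good g -> Good (f \o g).
Proof.
move=> Gf Gg u; have [dg Jg] := Gg u; have [df Jf] := Gf (g u).
split; first exact: differentiable_comp.
have JE := @jacobian_comp f g u dg df.
have dE : \det (jacobian (f \o g) u) = \det (jacobian g u) * \det (jacobian f (g u)).
  by rewrite JE det_mulmx.
have P := pm1M Jg Jf.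
case: P => E; [left|right]; exact: (etrans dE E).
Qed.


Lemma Good_id : Good id.
Proof.
move=> u.
have E : forall w, 'd (@id V) u w = w :=
  fun w => congr1 (fun F => F w) (@diff_val _ _ _ _ _ _ _ (is_diff_id u)).
split; first exact: (@ex_diff _ _ _ _ _ _ _ (is_diff_id u)).
have J1 : jacobian (@id V) u = 1%:M.
  apply/matrixP => i j; rewrite /jacobian mxE.
  apply: (etrans (congr1 (fun M : V => M 0 j) (E (delta_mx 0 i)))).
  by rewrite !mxE /= eq_sym.

by left; rewrite J1 det1.
Qed.

End Calc.

Section Hg.
Variable R : realType.
Variable N : nat.
Notation V := 'rV[R]_N.

Lemma Hgood_cst (k : 'I_N) (c : R) : Hgood k (fun _ : V => c).
Proof. by split => // v; exact: differentiable_cst. Qed.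

Lemma Hgood_coord (k l : 'I_N) : l != k -> Hgood k (fun v : V => v 0 l).
Proof.
move=> lk; split; first by move=> v; exact: differentiable_coord.
by move=> v t; rewrite !mxE (negbTE lk) /= mulr0 add0r.
Qed.

Lemma Hgood_add (k : 'I_N) h1 h2 : Hgood k h1 -> Hgood k h2 -> Hgood k (fun v : V => h1 v + h2 v).
Proof.
move=> [d1 i1] [d2 i2]; split; last by move=> v t; rewrite i1 i2.
move=> v; exact: (@differentiableD _ _ _ h1 h2).
Qed.

Lemma Hgood_sub (k : 'I_N) h1 h2 : Hgood k h1 -> Hgood k h2 -> Hgood k (fun v : V => h1 v - h2 v).
Proof.
move=> [d1 i1] [d2 i2]; split; last by move=> v t; rewrite i1 i2.
move=> v; exact: (@differentiableB _ _ _ h1 h2).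
Qed.

Lemma diff_expR (x : R) : differentiable (@expR R) x.
Proof. by apply/derivable1_diffP; exact: derivable_expR. Qed.

Lemma diff_ln (x : R) : 0 < x -> differentiable (@ln R) x.
Proof. by move=> x0; apply/derivable1_diffP; have := is_derive1_ln x0 => -[]. Qed.

Lemma Hgood_lse (k : 'I_N) h1 h2 : Hgood k h1 -> Hgood k h2 ->
  Hgood k (fun v : V => ln (expR (h1 v) + expR (h2 v))).
Proof.
move=> [d1 i1] [d2 i2]; split; last by move=> v t; rewrite i1 i2.
move=> v.
have e1 : differentiable (fun v : V => expR (h1 v)) v.
  exact: (differentiable_comp (d1 v) (diff_expR _)).
have e2 : differentiable (fun v : V => expR (h2 v)) v.
  exact: (differentiable_comp (d2 v) (diff_expR _)).
have e3 : differentiable (fun v : V => expR (h1 v) + expR (h2 v)) v.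
  exact: (@differentiableD _ _ _ (fun v : V => expR (h1 v)) (fun v : V => expR (h2 v))).
have pos : 0 < expR (h1 v) + expR (h2 v) by rewrite addr_gt0 // expR_gt0.
apply: differentiable_comp; first exact: e3.
exact: diff_ln.
Qed.

End Hg.

From mathcomp Require Import zify ring lra.

Lemma mem_tpairs N i j : ((i, j) \in tpairs N) = (0 < j < i)%N && (i <= N)%N.
Proof.
rewrite /tpairs; apply/flatten_mapP/idP.
- case=> a; rewrite mem_iota => /andP [a2 aN] /mapP [b]; rewrite mem_iota.
  move=> /andP [b1 bi] [-> ->]; apply/andP; split; [apply/andP; split|]; lia.
- move=> /andP [/andP [j0 ji] iN]; exists i; first by rewrite mem_iota; lia.
  apply/mapP; exists j => //; rewrite mem_iota; lia.
Qed.

Lemma uniq_tpairs N : uniq (tpairs N).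
Proof.
apply: allpairs_uniq_dep; first exact: iota_uniq.
  by move=> x _; exact: iota_uniq.
by move=> [a b] [c d] _ _ /= [-> ->].
Qed.

Section Arr.
Variable R : realType.
Variable N : nat.
Notation V := 'rV[R]_(tdim N).
Notation arr := (tarray R).

Definition pos (X : arr) := forall p, p \in tpairs N -> 0 < X p.1 p.2.
Definition Rep (F : arr -> arr) (f : V -> V) :=
  forall X, pos X -> pos (F X) /\ log_vec N (F X) = f (log_vec N X).
Definition GRep (F : arr -> arr) := exists f : V -> V, Good f /\ Rep F f.

Lemma GRep_comp F G : GRep F -> GRep G -> GRep (fun X => F (G X)).
Proof.
move=> [f [Gf Rf]] [g [Gg Rg]]; exists (f \o g); split; first exact: Good_comp.
move=> X pX; have [pG eG] := Rg X pX; have [pF eF] := Rf _ pG.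
by split => //; rewrite eF eG.
Qed.

Lemma GRep_id : GRep (fun X => X).
Proof. by exists id; split; [exact: Good_id|]. Qed.

Lemma GRep_ext F G : (forall X, pos X -> F X = G X) -> GRep G -> GRep F.
Proof.
move=> E [g [Gg Rg]]; exists g; split => // X pX; rewrite E //; exact: Rg.
Qed.

Lemma GRep_foldr (s : seq nat) (G : nat -> arr -> arr) :
  (forall a, a \in s -> GRep (G a)) -> GRep (fun X => foldr (fun a Y => G a Y) X s).
Proof.
elim: s => [|a s IH] H /=; first exact: GRep_id.
apply: (GRep_comp (F := G a) (G := fun X => foldr (fun a Y => G a Y) X s)).
  by apply: H; rewrite mem_head.
by apply: IH => b bs; apply: H; rewrite in_cons bs orbT.
Qed.

Lemma GRep_foldl (s : seq nat) (G : nat -> arr -> arr) :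
  (forall a, a \in s -> GRep (G a)) -> GRep (fun X => foldl (fun Y a => G a Y) X s).
Proof.
elim: s => [|a s IH] H /=; first exact: GRep_id.
apply: (GRep_comp (F := fun X => foldl (fun Y a => G a Y) X s) (G := G a)).
  by apply: IH => b bs; apply: H; rewrite in_cons bs orbT.
by apply: H; rewrite mem_head.
Qed.

Lemma idx_of p : p \in tpairs N -> {k : 'I_(tdim N) | nth (0,0)%N (tpairs N) k = p}.
Proof.
move=> pT; have lt : (index p (tpairs N) < tdim N)%N by rewrite index_mem.
by exists (Ordinal lt); rewrite /= nth_index.
Qed.

Lemma lv_coord (X : arr) (k : 'I_(tdim N)) p :
  nth (0,0)%N (tpairs N) k = p -> log_vec N X 0 k = ln (X p.1 p.2).
Proof. by rewrite mxE => ->. Qed.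

Lemma neq_idx (k l : 'I_(tdim N)) p q :
  nth (0,0)%N (tpairs N) k = p -> nth (0,0)%N (tpairs N) l = q -> p != q -> l != k.
Proof. by move=> <- <-; apply: contra => /eqP ->. Qed.

Lemma rep_upd (k : 'I_(tdim N)) p (e : arr -> R) (s : R) (h : V -> R) :
  nth (0,0)%N (tpairs N) k = p ->
  (forall X, pos X -> 0 < e X /\ ln (e X) = s * ln (X p.1 p.2) + h (log_vec N X)) ->
  Rep (fun X => upd X p.1 p.2 (e X)) (elem k s h).
Proof.
move=> Hk He X pX; have [e0 eE] := He X pX; split.
  by move=> q qT; rewrite /upd; case: ifP => // _; exact: pX.
apply/rowP => l; rewrite /elem /ek !mxE /upd.
have [lk|lk] := eqVneq l k.
- subst l; rewrite Hk !eqxx /= eE mulr1.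
  ring.
- have qp : nth (0,0)%N (tpairs N) l != p.
    rewrite -Hk nth_uniq ?uniq_tpairs //.
  have -> : ((nth (0,0)%N (tpairs N) l).1 == p.1) && ((nth (0,0)%N (tpairs N) l).2 == p.2) = false.
    by move: qp; case: (nth _ _ _) => a b; case: (p) => c d /negbTE.
  by rewrite andbF mulr0 addr0.
Qed.


Lemma GRep_l1 i : (2 < i <= N)%N -> GRep (lmap i 1).
Proof.
move=> Hi.
have pT : (i, 1%N) \in tpairs N by rewrite mem_tpairs; lia.
have qT : (i.-1, 1%N) \in tpairs N by rewrite mem_tpairs; lia.
case: (idx_of pT) => k Hk; case: (idx_of qT) => l Hl.
have lk : l != k.
  by apply: (neq_idx Hk Hl); apply/negP => /eqP [E]; lia.
exists (elem k 1 (fun v : V => v 0 l)); split.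
  by apply: Good_elem; [left|exact: Hgood_coord].
change (Rep (fun X => upd X (i, 1%N).1 (i, 1%N).2 (X i.-1 1%N * X i 1%N)) (elem k 1 (fun v : V => v 0 l))).
apply: (rep_upd Hk) => X pX.
have a0 := pX _ qT; have b0 := pX _ pT; simpl in a0, b0.
split; first exact: mulr_gt0.
by rewrite (lv_coord X Hl) /= mul1r lnM ?posrE // addrC.
Qed.

Lemma GRep_lj i j : (1 < j)%N -> (j.+1 < i <= N)%N -> GRep (lmap i j).
Proof.
move=> Hj Hi.
have aT : (i.-1, j.-1) \in tpairs N by rewrite mem_tpairs; lia.
have bT : (i.-1, j) \in tpairs N by rewrite mem_tpairs; lia.
have cT : (i, j.-1) \in tpairs N by rewrite mem_tpairs; lia.
have dT : (i, j) \in tpairs N by rewrite mem_tpairs; lia.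
case: (idx_of aT) => ka Ha; case: (idx_of bT) => kb Hb.
case: (idx_of cT) => kc Hc; case: (idx_of dT) => kd Hd.
have ni1 : (i.-1 == i) = false by apply/eqP; lia.
have nj1 : (j.-1 == j) = false by apply/eqP; lia.
pose F1 := fun X : arr => upd X (i, j).1 (i, j).2 (X i j * (X i.-1 j + X i j.-1)).
pose F2 := fun Y : arr => upd Y (i.-1, j.-1).1 (i.-1, j.-1).2
   (Y i.-1 j * Y i j.-1 / (Y i.-1 j.-1 * Y i.-1 j + Y i.-1 j.-1 * Y i j.-1)).
apply: (GRep_ext (G := fun X => F2 (F1 X))).
  move=> X _; rewrite /F1 /F2 /lmap /=.
  have -> : (j == 1%N) = false by apply/eqP; lia.
  apply/funext => a; apply/funext => b; rewrite /upd /=.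
  rewrite ni1 nj1 !andbF /=.
  have [->|ai] := eqVneq a i.
    by rewrite (eq_sym i) ni1 /=; case: (b == j).
  by case: ((a == i.-1) && (b == j.-1)).
have Lg : forall k : 'I_(tdim N), kb != k -> kc != k ->
    Hgood k (fun v : V => ln (expR (v 0 kb) + expR (v 0 kc))).
  by move=> k bk ck; apply: Hgood_lse; apply: Hgood_coord.
apply: (GRep_comp (F := F2) (G := F1)).
- exists (elem ka (-1) (fun v : V => v 0 kb + v 0 kc - ln (expR (v 0 kb) + expR (v 0 kc)))).
  have bk : kb != ka by apply: (neq_idx Ha Hb); apply/negP => /eqP; case => *; lia.
  have ck : kc != ka by apply: (neq_idx Ha Hc); apply/negP => /eqP; case => *; lia.
  split.
    apply: Good_elem; first by right.
    apply: Hgood_sub; last exact: Lg.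
    by apply: Hgood_add; apply: Hgood_coord.
  apply: (rep_upd Ha) => X pX.
  have a0 := pX _ aT; have b0 := pX _ bT; have c0 := pX _ cT; simpl in a0, b0, c0.
  have bc0 : 0 < X i.-1 j + X i j.-1 by rewrite addr_gt0.
  have -> : X i.-1 j.-1 * X i.-1 j + X i.-1 j.-1 * X i j.-1 = X i.-1 j.-1 * (X i.-1 j + X i j.-1).
    by rewrite mulrDr.
  split; first by rewrite divr_gt0 // ?mulr_gt0.
  rewrite ln_div ?posrE ?mulr_gt0 // !lnM ?posrE //.
  rewrite (lv_coord X Hb) (lv_coord X Hc) /= !lnK ?posrE //.
  ring.
- exists (elem kd 1 (fun v : V => ln (expR (v 0 kb) + expR (v 0 kc)))).
  have bk : kb != kd by apply: (neq_idx Hd Hb); apply/negP => /eqP; case => *; lia.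
  have ck : kc != kd by apply: (neq_idx Hd Hc); apply/negP => /eqP; case => *; lia.
  split.
    by apply: Good_elem; [left|exact: Lg].
  apply: (rep_upd Hd) => X pX.
  have b0 := pX _ bT; have c0 := pX _ cT; have d0 := pX _ dT; simpl in b0, c0, d0.
  have bc0 : 0 < X i.-1 j + X i j.-1 by rewrite addr_gt0.
  split; first by rewrite mulr_gt0.
  rewrite lnM ?posrE // (lv_coord X Hb) (lv_coord X Hc) /= !lnK ?posrE //.
  ring.
Qed.

Lemma GRep_lmap i j : (0 < j)%N -> (j.+1 < i <= N)%N -> GRep (lmap i j).
Proof.
move=> j0 Hi; have [->|j1] := eqVneq j 1%N; first by apply: GRep_l1; lia.
by apply: GRep_lj => //; lia.
Qed.

Lemma GRep_rinv n : (1 < n <= N)%N -> GRep (rinv n).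
Proof.
move=> Hn; have pT : (n, n.-1) \in tpairs N by rewrite mem_tpairs; lia.
case: (idx_of pT) => k Hk.
exists (elem k (-1) (fun _ : V => 0)); split.
  by apply: Good_elem; [right|exact: Hgood_cst].
change (Rep (fun X => upd X (n, n.-1).1 (n, n.-1).2 (X n n.-1)^-1) (elem k (-1) (fun _ : V => 0))).
apply: (rep_upd Hk) => X pX; have x0 := pX _ pT; simpl in x0.
split; first by rewrite invr_gt0.
by rewrite lnV ?posrE // addr0 mulN1r.
Qed.

Lemma getc_ok n (k : 'I_(tdim N)) i j :
  [|| j == 0%N, (i == n.+1) && (j == n.-1) |
      ((i, j) \in tpairs N) && (nth (0,0)%N (tpairs N) k != (i, j))] ->
  exists hq : V -> R, Hgood k hq /\
    forall X, pos X -> 0 < getc n X i j /\ ln (getc n X i j) = hq (log_vec N X).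
Proof.
move=> H.
have [j0|j0] := eqVneq j 0%N.
  exists (fun _ => 0); split; first exact: Hgood_cst.
  by move=> X _; rewrite /getc j0 eqxx /= ln1; split => //; exact: ltr01.
have [c|c] := boolP ((i == n.+1) && (j == n.-1)).
  exists (fun _ => 0); split; first exact: Hgood_cst.
  by move=> X _; rewrite /getc (negbTE j0) c /= ln1; split => //; exact: ltr01.
move: H; rewrite (negbTE j0) (negbTE c) /= => /andP [ijT nk].
case: (idx_of ijT) => l Hl.
have lk : l != k by apply: contra nk => /eqP <-; rewrite Hl.
exists (fun v : V => v 0 l); split; first exact: Hgood_coord.
move=> X pX; have x0 := pX _ ijT; rewrite /getc (negbTE j0) (negbTE c) /=.
by split => //; rewrite (lv_coord X Hl).
Qed.

Lemma GRep_bmap n m : (1 < m <= n)%N -> (n <= N)%N -> GRep (bmap n m).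
Proof.
move=> Hm Hn.
case Ho: (odd (n - m)).
  apply: (GRep_ext (G := fun X => X)); last exact: GRep_id.
  by move=> X _; rewrite /bmap Ho.
have pT : (m, m.-1) \in tpairs N by rewrite mem_tpairs; lia.
case: (idx_of pT) => k Hk.
have [h1 [G1 R1]] : exists hq : V -> R, (Hgood k hq /\ forall X : arr, pos X -> 0 < getc n X m.+1 m.-1 /\ ln (getc n X m.+1 m.-1) = hq (log_vec N X)).
  apply: getc_ok; have [mn|mn] := eqVneq m n.
    by apply/orP; right; apply/orP; left; rewrite mn !eqxx.
  apply/orP; right; apply/orP; right; apply/andP; split.
    by rewrite mem_tpairs; lia.
  by rewrite Hk; apply/negP => /eqP; case => *; lia.
have [h2 [G2 R2]] : exists hq : V -> R, (Hgood k hq /\ forall X : arr, pos X -> 0 < getc n X m (m - 2) /\ ln (getc n X m (m - 2)) = hq (log_vec N X)).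
  apply: getc_ok; have [m2|m2] := eqVneq m 2%N.
    by rewrite m2.
  apply/orP; right; apply/orP; right; apply/andP; split.
    by rewrite mem_tpairs; lia.
  by rewrite Hk; apply/negP => /eqP; case => *; lia.
apply: (GRep_ext (G := fun X => upd X (m, m.-1).1 (m, m.-1).2
   (getc n X m.+1 m.-1 * getc n X m (m - 2) / X m m.-1))).
  by move=> X _; rewrite /bmap Ho.
exists (elem k (-1) (fun v : V => h1 v + h2 v)); split.
  by apply: Good_elem; [right|exact: Hgood_add].
apply: (rep_upd Hk) => X pX.
have [a0 aE] := R1 X pX; have [b0 bE] := R2 X pX; have x0 := pX _ pT; simpl in x0.
split; first by rewrite divr_gt0 ?mulr_gt0.
rewrite ln_div ?posrE ?mulr_gt0 // lnM ?posrE // aE bE /=.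
ring.
Qed.

Lemma GRep_rho n j : (0 < j)%N -> (j.+1 < n)%N -> (n <= N)%N -> GRep (rho n j).
Proof.
move=> j0 jn nN.
apply: (GRep_foldr (G := fun k => lmap (n - j + k) k)) => k.
rewrite mem_iota => /andP [k1 kj].
apply: GRep_lmap; lia.
Qed.

Lemma GRep_rho_last n : (1 < n <= N)%N -> GRep (rho_last n).
Proof.
move=> Hn.
apply: (GRep_comp (F := fun X => foldr (fun m Y => bmap n m Y) X (iota 2 n.-1)) (G := rinv n)).
  apply: GRep_foldr => m; rewrite mem_iota => /andP [m2 mn].
  apply: GRep_bmap; lia.
exact: GRep_rinv.
Qed.

Lemma GRep_Rtri n : (2 < n <= N)%N -> GRep (Rtri n).
Proof.
move=> Hn.
apply: (GRep_comp (F := rho_last n) (G := fun X => foldl (fun Y j => rho n j Y) X (iota 1 (n - 2)))).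
  apply: GRep_rho_last; lia.
apply: (GRep_foldl (G := fun j => rho n j)) => j; rewrite mem_iota => /andP [j1 jn].
apply: GRep_rho; lia.
Qed.

End Arr.

Section Fixed.
Variable R : realType.
Notation arr := (tarray R).

Definition fixed_above (r : nat) (F : arr -> arr) :=
  forall X a b, (r < a)%N -> F X a b = X a b.

Lemma fa_lmap r i j : (i <= r)%N -> fixed_above r (lmap i j).
Proof.
move=> ir X a b ra; rewrite /lmap.
have h1 : (a == i) = false by apply/eqP; lia.
have h2 : (a == i.-1) = false by apply/eqP; lia.
by case: ifP => _; rewrite /upd /= ?h1 ?h2.
Qed.

Lemma fa_foldr r (s : seq nat) (G : nat -> arr -> arr) :
  (forall a, a \in s -> fixed_above r (G a)) ->
  fixed_above r (fun X => foldr (fun a Y => G a Y) X s).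
Proof.
elim: s => [|a s IH] H X x y rx //=.
rewrite H ?mem_head //.
by apply: IH => // c cs; apply: H; rewrite in_cons cs orbT.
Qed.

Lemma fa_foldl r (s : seq nat) (G : nat -> arr -> arr) :
  (forall a, a \in s -> fixed_above r (G a)) ->
  fixed_above r (fun X => foldl (fun Y a => G a Y) X s).
Proof.
elim: s => [|a s IH] H X x y rx //=.
rewrite IH //; first by rewrite H ?mem_head.
by move=> c cs; apply: H; rewrite in_cons cs orbT.
Qed.

Lemma fa_Rtri n : fixed_above n (Rtri n).
Proof.
move=> X a b na; rewrite /Rtri /rho_last.
rewrite (@fa_foldr n (iota 2 n.-1) (fun m => bmap n m)) //; last first.
  move=> m; rewrite mem_iota => /andP [m2 mn] Y x y nx; rewrite /bmap.
  case: ifP => _ //; rewrite /upd; have -> : (x == m) = false by apply/eqP; lia.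
  by [].
rewrite /rinv /upd; have -> : (a == n) = false by apply/eqP; lia.
rewrite /=.
rewrite (@fa_foldl n (iota 1 (n - 2)) (fun j => rho n j)) //.
move=> j; rewrite mem_iota => /andP [j1 jn].
apply: fa_foldr => k; rewrite mem_iota => /andP [k1 kj].
apply: fa_lmap; lia.
Qed.

Lemma Ttri_above m (X : arr) a b : (m < a)%N -> Ttri m X a b = X a b.
Proof.
case: m => [|[|m]] //; elim: m a b => [|m IH] a b ma //=.
rewrite fa_Rtri //; have -> : (a == m.+3) = false by apply/eqP; lia.
by apply: IH; lia.
Qed.

Lemma Ttri_step m (X : arr) : Ttri m.+3 X = Rtri m.+3 (Ttri m.+2 X).
Proof.
have -> : Ttri m.+3 X = Rtri m.+3 (fun i j => if i == m.+3 then X i j else Ttri m.+2 X i j) by [].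
congr (Rtri _ _); apply/funext => i; apply/funext => j.
by case: eqP => // ->; rewrite Ttri_above.
Qed.

End Fixed.

Lemma GRep_Ttri (R : realType) N m : (1 < m <= N)%N -> GRep N (@Ttri R m).
Proof.
case: m => [|[|m]] //; elim: m => [|m IH] Hm.
  apply: (GRep_ext (G := fun X => X)); last exact: GRep_id.
  by [].
apply: (GRep_ext (G := fun X => Rtri m.+3 (Ttri m.+2 X))).
  by move=> X _; rewrite Ttri_step.
apply: (GRep_comp (F := Rtri m.+3) (G := @Ttri R m.+2)).
  by apply: GRep_Rtri; lia.
by apply: IH; lia.
Qed.

Lemma pos_exp (R : realType) N (u : 'rV[R]_(tdim N)) : pos N (exp_array u).
Proof.
move=> p _; rewrite /exp_array; case: insubP => [k _ _|_] //.
  exact: expR_gt0.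
Qed.

Lemma log_exp (R : realType) N (u : 'rV[R]_(tdim N)) : log_vec N (exp_array u) = u.
Proof.
apply/rowP => l; rewrite mxE /exp_array -surjective_pairing.
rewrite index_uniq ?uniq_tpairs //.
case: insubP => [k _ kE|]; last by rewrite ltn_ord.
have -> : k = l by apply: val_inj.
exact: expRK.
Qed.

Theorem theorem6p2 (R : realType) (n : nat) (hn : (2 <= n)%N)
    (u : 'rV[R]_(tdim n)) :
  differentiable (@logT R n) u /\
  (\det (jacobian (@logT R n) u) = 1 \/ \det (jacobian (@logT R n) u) = -1).
Proof.
have [f [Gf Rf]] : GRep n (@Ttri R n) by apply: GRep_Ttri; rewrite hn leqnn.
have E : @logT R n = f.
  apply/funext => v; rewrite /logT; have [_ ->] := Rf _ (pos_exp v).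
  by rewrite log_exp.
rewrite E; exact: Gf.
Qed.
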